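(* Let $G=(V_G,E_G)$ be a finite graph whose automorphism group acts vertex-transitively on $V_G$. Then for every real vector $\vec J=(J_\alpha)_{\alpha\in V_G}$, the optimum of the graph semi-definite program for $H$ is at most $$-\Bigl(\sum_\alpha |J_\alpha|\Bigr)\,|V_G|^{-1/2}\sqrt{\vartheta(G)}.$$
   Context: Let $G=(V_G,E_G)$ be a finite graph; rows and columns of the matrices below are indexed by $V_G$. For a real vector $\vec J$, the ''graph semi-definite program for $H$'' is: minimize $(\vec J,v)=\sum_\alpha J_\alpha v_\alpha$ over real vectors $v$ and real symmetric matrices $M$, subject to: - $M_{\alpha,\alpha}=1$ for all $\alpha$; - $M_{\alpha,\beta}=0$ whenever $(\alpha,\beta)\in E_G$; - the block matrix $N=\begin{pmatrix}1 & v^T\\ v & M\end{pmatrix}$ is positive semi-definite. $\vartheta(G)$ denotes the Lovász theta function: the maximum of the sum of all entries of a real symmetric positive semi-definite matrix $B$ with $\mathrm{tr}\,B=1$ and $B_{\alpha,\beta}=0$ whenever $(\alpha,\beta)\in E_G$. *)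

(* Defs.v *)
From HB Require Import structures.
From mathcomp Require Import all_boot all_order all_algebra all_fingroup.
From mathcomp Require Import classical_sets reals.
Set Implicit Arguments. Unset Strict Implicit. Unset Printing Implicit Defensive.
Import Order.TTheory GRing.Theory Num.Theory.
Local Open Scope ring_scope.
Local Open Scope classical_set_scope.

Definition simple_graph {n : nat} (e : rel 'I_n) : Prop :=
  symmetric e /\ irreflexive e.

Definition graph_aut {n : nat} (e : rel 'I_n) (s : {perm 'I_n}) : Prop :=
  forall x y, e (s x) (s y) = e x y.

Definition vertex_transitive {n : nat} (e : rel 'I_n) : Prop :=
  forall x y : 'I_n, exists s : {perm 'I_n}, graph_aut e s /\ s x = y.

Definition psd {R : numDomainType} {m : nat} (A : 'M[R]_m) : Prop :=
  A^T = A /\ forall x : 'cV[R]_m, 0 <= (x^T *m A *m x) 0 0.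

Definition sdp_feasible {R : numDomainType} {n : nat} (e : rel 'I_n)
    (v : 'cV[R]_n) (M : 'M[R]_n) : Prop :=
  [/\ forall a, M a a = 1,
      forall a b, e a b -> M a b = 0,
      M^T = M &
      psd (block_mx (1%:M : 'M[R]_1) v^T v M)].

Definition sdp_value {R : numDomainType} {n : nat} (J v : 'cV[R]_n) : R :=
  \sum_(a < n) J a ord0 * v a ord0.

Definition sdp_opt {R : realType} {n : nat} (e : rel 'I_n) (J : 'cV[R]_n) : R :=
  inf [set x : R | exists v M, sdp_feasible e v M /\ x = sdp_value J v].

Definition theta_feasible {R : numDomainType} {n : nat} (e : rel 'I_n)
    (B : 'M[R]_n) : Prop :=
  [/\ psd B, \tr B = 1 & forall a b, e a b -> B a b = 0].

Definition lovasz_theta {R : realType} {n : nat} (e : rel 'I_n) : R :=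
  sup [set s : R | exists B, theta_feasible e B /\
                       s = \sum_(a < n) \sum_(b < n) B a b].

(* Main.v *)
Require Import Defs.
From HB Require Import structures.
From mathcomp Require Import all_boot all_order all_algebra all_fingroup.
From mathcomp Require Import classical_sets reals.
From mathcomp Require Import ring lra.
Import Order.TTheory GRing.Theory Num.Theory.
Local Open Scope ring_scope.
Set Implicit Arguments. Unset Strict Implicit.


Lemma quadE (R : comRingType) m (A : 'M[R]_m) (x : 'cV[R]_m) :
  (x^T *m A *m x) 0 0 = \sum_i \sum_j x i 0 * A i j * x j 0.
Proof.
rewrite mxE exchange_big /=; apply: eq_bigr => j _.
rewrite mxE mulr_suml; apply: eq_bigr => i _.
by rewrite mxE.
Qed.

Lemma quad_block (R : comRingType) n (v : 'cV[R]_n) (M : 'M[R]_n) (x0 : R) (y : 'cV[R]_n) :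
  let x := col_mx (x0%:M : 'M_1) y in
  (x^T *m block_mx (1%:M : 'M_1) v^T v M *m x) 0 0 =
  x0 * x0 + x0 * (\sum_j v j 0 * y j 0) + (\sum_i y i 0 * v i 0) * x0
  + \sum_i \sum_j y i 0 * M i j * y j 0.
Proof.
move=> x; rewrite quadE.
under eq_bigr => i _ do rewrite big_split_ord /= big_ord1.
rewrite big_split_ord /= big_ord1 big_split /=.
rewrite /x !block_mxEul !col_mxEu !mxE /= mulr1n mulr1 -!addrA.
congr (_ + (_ + (_ + _))).
- rewrite mulr_sumr; apply: eq_bigr => j _.
  by rewrite block_mxEur col_mxEd !mxE /=; ring.
- rewrite mulr_suml; apply: eq_bigr => j _.
  by rewrite block_mxEdl col_mxEd ?mxE /=.
- apply: eq_bigr => i _; apply: eq_bigr => j _.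
  by rewrite block_mxEdr !col_mxEd.
Qed.


Definition autset {n} (e : rel 'I_n) : {set {perm 'I_n}} :=
  [set s : {perm 'I_n} | [forall x, [forall y, e (s x) (s y) == e x y]]].

Lemma autsetP n (e : rel 'I_n) s : reflect (graph_aut e s) (s \in autset e).
Proof.
rewrite inE; apply: (iffP forallP) => [H x y | H x].
  by have /forallP/(_ y)/eqP := H x.
by apply/forallP => y; rewrite H.
Qed.

Lemma autsetM n (e : rel 'I_n) s t : s \in autset e -> t \in autset e ->
  (s * t)%g \in autset e.
Proof.
move=> /autsetP Hs /autsetP Ht; apply/autsetP => x y.
by rewrite !permM Ht Hs.
Qed.

Lemma aut1 n (e : rel 'I_n) : 1%g \in autset e.
Proof. by apply/autsetP => x y; rewrite !perm1. Qed.

Lemma fiber_le n (e : rel 'I_n) : vertex_transitive e -> forall a c d : 'I_n,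
  (#|[set s in autset e | s a == c]| <= #|[set s in autset e | s a == d]|)%N.
Proof.
move=> Ht a c d; have [t [/autsetP At tc]] := Ht c d.
rewrite -(card_imset _ (mulIg t)); apply: subset_leq_card.
apply/fintype.subsetP => u /imsetP [s]; rewrite inE => /andP [As /eqP sa] ->.
by rewrite inE autsetM //= permM sa tc eqxx.
Qed.

Lemma fiber_eq n (e : rel 'I_n) : vertex_transitive e -> forall a c,
  #|[set s in autset e | s a == c]| = #|[set s in autset e | s a == a]|.
Proof. by move=> Ht a c; apply/eqP; rewrite eqn_leq !fiber_le. Qed.

Lemma orbit_sum0 (R : comRingType) n (e : rel 'I_n) : vertex_transitive e ->
  forall (f : 'I_n -> R) a,
  \sum_(s in autset e) f (s a) =
    (\sum_c f c) *+ #|[set s in autset e | s a == a]|.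
Proof.
move=> Ht f a.
rewrite (partition_big (fun s : {perm 'I_n} => s a) predT) //=.
rewrite -sumrMnl; apply: eq_bigr => c _.
rewrite (eq_bigr (fun _ => f c)); last by move=> s /andP [_ /eqP ->].
rewrite -(fiber_eq Ht a c) -sumr_const; apply: eq_bigl => s.
by rewrite inE.
Qed.

Lemma orbit_sum (R : comRingType) n (e : rel 'I_n) : vertex_transitive e ->
  forall (f : 'I_n -> R) a,
  n%:R * \sum_(s in autset e) f (s a) = #|autset e|%:R * \sum_c f c.
Proof.
move=> Ht f a.
have := orbit_sum0 Ht (fun _ => 1 : R) a.
rewrite sumr_const sumr_const card_ord => ->.
rewrite orbit_sum0 //. rewrite -mulr_natl -[X in _ = X * _]mulr_natl.
rewrite -mulr_natl; ring.
Qed.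


Definition Bsym (R : realType) n (e : rel 'I_n) (B : 'M[R]_n) (a b : 'I_n) : R :=
  (#|autset e|%:R)^-1 * \sum_(s in autset e) B (s a) (s b).

Lemma cardA_neq0 (R : realType) n (e : rel 'I_n) : (#|autset e|%:R : R) != 0.
Proof.
rewrite pnatr_eq0 -lt0n; apply/card_gt0P; exists 1%g; exact: aut1.
Qed.

Lemma psd_perm (R : realType) n (B : 'M[R]_n) : psd B ->
  forall (s : {perm 'I_n}) (z : 'I_n -> R),
  0 <= \sum_i \sum_j z i * B (s i) (s j) * z j.
Proof.
move=> [_ HB] s z.
have := HB (\col_i z ((s^-1)%g i)); rewrite quadE.
rewrite (reindex_inj (@perm_inj _ s)) /=.
under eq_bigr => i _ do rewrite (reindex_inj (@perm_inj _ s)) /=.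
under eq_bigr => i _ do under eq_bigr => j _ do rewrite !mxE !permK.
by [].
Qed.

Lemma Bsym_psd (R : realType) n (e : rel 'I_n) (B : 'M[R]_n) : psd B ->
  forall z : 'I_n -> R, 0 <= \sum_i \sum_j z i * Bsym e B i j * z j.
Proof.
move=> HB z.
have -> : \sum_i \sum_j z i * Bsym e B i j * z j =
  (#|autset e|%:R)^-1 * \sum_(s in autset e) \sum_i \sum_j z i * B (s i) (s j) * z j.
  transitivity (\sum_i \sum_j \sum_(s in autset e)
      (#|autset e|%:R)^-1 * (z i * B (s i) (s j) * z j)).
    apply: eq_bigr => i _; apply: eq_bigr => j _.
    rewrite /Bsym mulr_sumr mulr_sumr mulr_suml; apply: eq_bigr => s _; ring.
  under eq_bigr => i _ do rewrite exchange_big.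
  rewrite exchange_big mulr_sumr /=; apply: eq_bigr => s _.
  rewrite mulr_sumr; apply: eq_bigr => i _.
  by rewrite mulr_sumr.
apply: mulr_ge0; first by rewrite invr_ge0 ler0n.
by apply: sumr_ge0 => s _; apply: psd_perm.
Qed.

Lemma psd_sym (R : realType) n (B : 'M[R]_n) : psd B -> forall i j, B i j = B j i.
Proof. by move=> [HT _] i j; rewrite -{1}HT mxE. Qed.

Lemma Bsym_sym (R : realType) n (e : rel 'I_n) (B : 'M[R]_n) : psd B ->
  forall i j, Bsym e B i j = Bsym e B j i.
Proof.
move=> HB i j; rewrite /Bsym; congr (_ * _); apply: eq_bigr => s _.
exact: psd_sym.
Qed.

Lemma Bsym_edge (R : realType) n (e : rel 'I_n) (B : 'M[R]_n) :
  (forall a b, e a b -> B a b = 0) ->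
  forall a b, e a b -> Bsym e B a b = 0.
Proof.
move=> HE a b eab; rewrite /Bsym big1 ?mulr0 // => s /autsetP As.
by apply: HE; rewrite As.
Qed.

Lemma Bsym_diag (R : realType) n (e : rel 'I_n) (B : 'M[R]_n) :
  vertex_transitive e -> \tr B = 1 -> (0 < n)%N ->
  forall a, Bsym e B a a = (n%:R)^-1.
Proof.
move=> Ht Htr n0 a.
have := orbit_sum Ht (fun c => B c c : R) a.
rewrite /mxtrace in Htr; rewrite Htr mulr1 /Bsym => H.
have nz : (n%:R : R) != 0 by rewrite pnatr_eq0 -lt0n.
have Nz := cardA_neq0 R e.
apply: (mulfI nz); rewrite mulrCA H divff // mulVf //.
Qed.

Lemma Bsym_row (R : realType) n (e : rel 'I_n) (B : 'M[R]_n) :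
  vertex_transitive e -> (0 < n)%N ->
  forall a, \sum_b Bsym e B a b = (n%:R)^-1 * \sum_c \sum_b B c b.
Proof.
move=> Ht n0 a.
have := orbit_sum Ht (fun c => \sum_b B c b : R) a.
have nz : (n%:R : R) != 0 by rewrite pnatr_eq0 -lt0n.
have Nz := cardA_neq0 R e.
have -> : \sum_b Bsym e B a b = (#|autset e|%:R)^-1 * \sum_(s in autset e) \sum_b B (s a) b.
  rewrite /Bsym -mulr_sumr exchange_big /=; congr (_ * _); apply: eq_bigr => s _.
  by rewrite [RHS](reindex_inj (@perm_inj _ s)).
move=> H; apply: (mulfI nz); rewrite mulrCA H. by rewrite !mulrA mulVf // divff // !mul1r.
Qed.


Lemma key_ineq (R : realType) n (beta : 'I_n -> 'I_n -> R) (rho : R) :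
  (forall i j, beta i j = beta j i) ->
  (forall i, \sum_j beta i j = rho) ->
  (forall z : 'I_n -> R, 0 <= \sum_i \sum_j z i * beta i j * z j) ->
  (0 < n)%N ->
  forall z : 'I_n -> R,
  rho * (\sum_i z i) ^+ 2 <= n%:R * \sum_i \sum_j z i * beta i j * z j.
Proof.
move=> Hsym Hrow Hpsd n0 z.
set w := \sum_i z i; set Q := \sum_i \sum_j z i * beta i j * z j.
set lam := w / n%:R.
have nz : (n%:R : R) != 0 by rewrite pnatr_eq0 -lt0n.
have H1 : \sum_i \sum_j z i * beta i j = rho * w.
  rewrite /w mulr_sumr; apply: eq_bigr => i _; rewrite -mulr_sumr Hrow mulrC //.
have H2 : \sum_i \sum_j beta i j * z j = rho * w.
  rewrite exchange_big /w mulr_sumr; apply: eq_bigr => j _.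
  rewrite -mulr_suml (eq_bigr (fun i => beta j i)) ?Hrow 1?mulrC // => i _.
have H3 : \sum_i \sum_j beta i j = n%:R * rho.
  rewrite (eq_bigr (fun _ => rho)) ?sumr_const ?card_ord ?mulr_natl // => i _.
have E : \sum_i \sum_j (z i - lam) * beta i j * (z j - lam) =
    Q - lam * (\sum_i \sum_j z i * beta i j) - lam * (\sum_i \sum_j beta i j * z j)
    + lam ^+ 2 * (\sum_i \sum_j beta i j).
  rewrite /Q !mulr_sumr -!sumrB -!big_split; apply: eq_bigr => i _.
  rewrite !mulr_sumr -!sumrB -!big_split; apply: eq_bigr => j _ /=; ring.
have := Hpsd (fun i => z i - lam); rewrite E H1 H2 H3 => H.
have Hn : 0 < (n%:R : R) by rewrite ltr0n.
have : 0 <= n%:R * (Q - lam * (rho * w) - lam * (rho * w) + lam ^+ 2 * (n%:R * rho)).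
  by apply: mulr_ge0 => //; apply: ltW.
have -> : n%:R * (Q - lam * (rho * w) - lam * (rho * w) + lam ^+ 2 * (n%:R * rho))
   = n%:R * Q - rho * w ^+ 2.
  rewrite /lam; field.
  by [].
by rewrite subr_ge0.
Qed.

Lemma psd_sum_ge0 (R : realType) n (B : 'M[R]_n) : psd B -> 0 <= \sum_a \sum_b B a b.
Proof.
move=> [_ HB]; have := HB (const_mx 1); rewrite quadE.
under eq_bigr => i _ do under eq_bigr => j _ do rewrite !mxE mul1r mulr1.
by [].
Qed.

Lemma construct (R : realType) n (e : rel 'I_n) :
  simple_graph e -> vertex_transitive e -> (0 < n)%N ->
  forall (J : 'cV[R]_n) (B : 'M[R]_n), theta_feasible e B ->
  exists v M, sdp_feasible e v M /\
    sdp_value J v = - (\sum_a `|J a ord0|) * (Num.sqrt (n%:R : R))^-1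
        * Num.sqrt (\sum_a \sum_b B a b).
Proof.
move=> Hs Ht n0 J B [HB Htr HE].
set s := \sum_a \sum_b B a b.
have s0 : 0 <= s := psd_sum_ge0 HB.
set beta := Bsym e B.
have nz : (n%:R : R) != 0 by rewrite pnatr_eq0 -lt0n.
have Hn : 0 < (n%:R : R) by rewrite ltr0n.
have bsym : forall i j, beta i j = beta j i := Bsym_sym e HB.
have brow : forall i, \sum_j beta i j = n%:R^-1 * s := Bsym_row B Ht n0.
have bdiag : forall a, beta a a = n%:R^-1 := Bsym_diag Ht Htr n0.
have bpsd : forall z : 'I_n -> R, 0 <= \sum_i \sum_j z i * beta i j * z j :=
  Bsym_psd e HB.
set eps := fun a => if J a ord0 < 0 then -1 else 1 : R.
have epsE : forall a, eps a * eps a = 1.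
  by move=> a; rewrite /eps; case: ifP => _; rewrite ?mulrNN mulr1.
have epsJ : forall a, J a ord0 * eps a = `|J a ord0|.
  move=> a; rewrite /eps; case: ifP => h.
    by rewrite ltr0_norm // mulrN1.
  by rewrite ger0_norm ?mulr1 // leNgt h.
set c := Num.sqrt s * (Num.sqrt (n%:R : R))^-1.
have c0 : 0 <= c by rewrite mulr_ge0 ?invr_ge0 ?sqrtr_ge0.
have cc : c * c * n%:R = s.
  have sn : Num.sqrt (n%:R : R) != 0 by rewrite sqrtr_eq0 -ltNge.
  have := sqr_sqrtr s0; have := @sqr_sqrtr _ (n%:R : R) (ltW Hn).
  rewrite /c !expr2 => h1 h2.
  rewrite -[in RHS]h2 -[X in _ * X]h1; field; exact: sn.
exists (\col_a (- (eps a * c))).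
exists (\matrix_(i, j) (eps i * eps j * (n%:R * beta i j))).  
split.
  split.
  - by move=> a; rewrite mxE epsE bdiag mul1r divff.
  - by move=> a b eab; rewrite mxE /beta Bsym_edge // mulr0 mulr0.
  - by apply/matrixP => i j; rewrite !mxE bsym (mulrC (eps j)).
  - split.
      by rewrite tr_block_mx trmxK tr_scalar_mx; congr block_mx; apply/matrixP => i j;
        rewrite !mxE bsym (mulrC (eps j)).
    move=> x; rewrite -(vsubmxK x) (mx11_scalar (usubmx x)) quad_block.
    set x0 := usubmx x 0 0; set y := dsubmx x.
    set z := fun i => eps i * y i 0.
    have Hv : \sum_j (\col_a - (eps a * c)) j 0 * y j 0 = - c * \sum_i z i.
      rewrite mulr_sumr; apply: eq_bigr => j _; rewrite mxE /z; ring.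
    have Hv' : \sum_j y j 0 * (\col_a - (eps a * c)) j 0 = - c * \sum_i z i.
      rewrite mulr_sumr; apply: eq_bigr => j _; rewrite mxE /z; ring.
    have HM : \sum_i \sum_j y i 0 * (\matrix_(i, j) (eps i * eps j * (n%:R * beta i j))) i j * y j 0
        = n%:R * \sum_i \sum_j z i * beta i j * z j.
      rewrite mulr_sumr; apply: eq_bigr => i _; rewrite mulr_sumr; apply: eq_bigr => j _.
      rewrite mxE /z; ring.
    rewrite Hv Hv' HM.
    have K := key_ineq bsym brow bpsd n0 z.
    move: K; set w := \sum_i z i; set Q := \sum_i \sum_j z i * beta i j * z j => K.
    have cc' : n%:R^-1 * s = c * c by rewrite -cc mulrC (mulfK nz).
    rewrite cc' in K.
    have sq := sqr_ge0 (x0 - c * w).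
    nra.
rewrite /sdp_value -mulrA [RHS]mulNr mulr_suml -sumrN; apply: eq_bigr => a _.
rewrite mxE -epsJ /c; ring.
Qed.


Lemma feas_bound (R : realType) n (e : rel 'I_n) (v : 'cV[R]_n) M :
  sdp_feasible e v M -> forall a, `|v a 0| <= 1.
Proof.
move=> [Hd _ _ [_ Hp]] a.
set t := v a 0.
have := Hp (col_mx ((1 : R)%:M) (\col_j (if j == a then - t else 0))).
rewrite quad_block.
have E1 : \sum_j v j 0 * (\col_j (if j == a then - t else 0)) j 0 = - t * t.
  rewrite (bigD1 a) //= big1 ?addr0; last by move=> j /negbTE ja; rewrite mxE ja mulr0.
  by rewrite mxE eqxx /t mulrC.
have E2 : \sum_j (\col_j (if j == a then - t else 0)) j 0 * v j 0 = - t * t.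
  rewrite (bigD1 a) //= big1 ?addr0; last by move=> j /negbTE ja; rewrite mxE ja mul0r.
  by rewrite mxE eqxx /t.
have E3 : \sum_i \sum_j (\col_j (if j == a then - t else 0)) i 0 * M i j *
     (\col_j (if j == a then - t else 0)) j 0 = t * t.
  rewrite (bigD1 a) //= [X in _ + X]big1 ?addr0; last first.
    by move=> i /negbTE ia; apply: big1 => j _; rewrite mxE ia !mul0r.
  rewrite (bigD1 a) //= big1 ?addr0; last by move=> j /negbTE ja; rewrite !mxE ja mulr0.
  by rewrite !mxE eqxx Hd mulr1 mulrNN.
rewrite E1 E2 E3 => H.
rewrite ler_norml; apply/andP; split; nra.
Qed.

Lemma value_lb (R : realType) n (e : rel 'I_n) (J v : 'cV[R]_n) M :
  sdp_feasible e v M -> - (\sum_a `|J a ord0|) <= sdp_value J v.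
Proof.
move=> F; rewrite /sdp_value -sumrN; apply: ler_sum => a _.
have h := feas_bound F a.
have : `|J a ord0 * v a ord0| <= `|J a ord0|.
  by rewrite normrM; apply: ler_piMr.
by rewrite ler_norml => /andP [].
Qed.

Lemma feasible0 (R : realType) n (e : rel 'I_n) :
  simple_graph e -> sdp_feasible e (0 : 'cV[R]_n) 1%:M.
Proof.
move=> [_ Hirr]; split.
- by move=> a; rewrite mxE eqxx.
- move=> a b eab; rewrite mxE; case: eqP => // ab; subst b.
  by rewrite Hirr in eab.
- exact: tr_scalar_mx.
split.
  by rewrite tr_block_mx !trmx0 !tr_scalar_mx.
move=> x; rewrite -(vsubmxK x) (mx11_scalar (usubmx x)) quad_block.
set y := dsubmx x; set x0 := usubmx x 0 0.
have e1 : \sum_j (0 : 'cV[R]_n) j 0 * y j 0 = 0 by apply: big1 => j _; rewrite mxE mul0r.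
have e2 : \sum_j y j 0 * (0 : 'cV[R]_n) j 0 = 0 by apply: big1 => j _; rewrite !mxE mulr0.
rewrite e1 e2 mulr0 mul0r !addr0.
rewrite -expr2; apply: addr_ge0; first exact: sqr_ge0.
apply: sumr_ge0 => i _.
rewrite (bigD1 i) //= big1 ?addr0; last first.
  by move=> j /negbTE ij; rewrite [1%:M i j]mxE eq_sym ij mulr0n mulr0 mul0r.
by rewrite [1%:M i i]mxE eqxx mulr1n mulr1 -expr2 sqr_ge0.
Qed.

Unset Implicit Arguments.

Theorem mainTheorem2 (R : realType) (n : nat) (e : rel 'I_n) :
  simple_graph e -> vertex_transitive e ->
  forall J : 'cV[R]_n,
    sdp_opt e J <=
      - (\sum_(a < n) `|J a ord0|) * (Num.sqrt (n%:R : R))^-1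
        * Num.sqrt (lovasz_theta e).
Proof.
move=> Hs Ht J.
rewrite /sdp_opt /lovasz_theta.
set S := (X in inf X); set T := (X in sup X).
have hlb : has_lbound S.
  exists (- (\sum_a `|J a ord0|)); move=> x [v [M [F ->]]]; exact: value_lb F.
have infS : forall x, S x -> inf S <= x by move=> x Sx; exact: ge_inf hlb x Sx.
have I0 : inf S <= 0.
  apply: infS; exists 0, 1%:M; split; first exact: feasible0.
  by rewrite /sdp_value big1 // => a _; rewrite mxE mulr0.
set c := (\sum_a `|J a ord0|) * (Num.sqrt (n%:R : R))^-1.
have c0 : 0 <= c by rewrite mulr_ge0 ?invr_ge0 ?sqrtr_ge0 ?sumr_ge0.
rewrite mulNr -/c mulNr.
case: (posnP n) => [n0|npos].
  have z : \sum_a `|J a ord0| = 0 by apply: big1 => a _; have := ltn_ord a; rewrite [X in (_ < X)%N]n0.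
  by rewrite /c z !mul0r oppr0.
have HT : forall t, T t -> c * Num.sqrt t <= - inf S.
  move=> t [B [FB ->]].
  have [v [M [F E]]] := construct Hs Ht npos J FB.
  rewrite lerNr; apply: (le_trans (infS _ _)); first by exists v, M.
  by rewrite E /c -!mulNr.
have [c0'|cpos] := eqVneq c 0.
  by rewrite c0' mul0r oppr0.
have cp : 0 < c by rewrite lt0r cpos c0.
case: (boolp.pselect (exists t, T t)) => [[t Tt]|Tn]; last first.
  rewrite sup_out; first by rewrite sqrtr0 mulr0 oppr0.
  by move=> [[t Tt] _]; apply: Tn; exists t.
have K0 : 0 <= - inf S / c by rewrite divr_ge0 // oppr_ge0.
have Hsup : sup T <= (- inf S / c) ^+ 2.
  apply: ge_sup; first by exists t.
  move=> u Tu; have := HT u Tu.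
  have u0 : 0 <= u by case: Tu => B [[HB _ _] ->]; exact: psd_sum_ge0.
  rewrite -(ler_pdivlMl _ _ cp) => h.
  rewrite -[u in u <= _](sqr_sqrtr u0) ler_pXn2r ?nnegrE ?sqrtr_ge0 //.
  by rewrite mulrC.
have := ler_wsqrtr Hsup; rewrite sqrtr_sqr ger0_norm // => h.
rewrite lerNr -(ler_pdivlMl _ _ cp) mulrC.
exact: h.
Qed.
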